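(* Let $c\in(0,\sqrt2)$ and let $$\Omega_{p,\theta}:=\{(p,\theta): p\in(0,1),\ \theta\in(\theta_{min}(c),\theta_2(c,p)),\ \theta\neq\theta_1(c,p)\},$$ where only those $p$ with $(\theta_{min}(c),\theta_2(c,p))\neq\emptyset$ are considered. Then $$\sup_{(p,\theta)\in\Omega_{p,\theta}} L(c,p,\theta)\le 1-\frac{c}{\pi}\left(\sqrt{2-c^2}+\theta_{min}(c)\right).$$
   Context: Let $\lambda=\frac{\sqrt{2-c^2}}{2}$ and $\omega=\frac{\sqrt{2+c^2}}{2}$ (so $\lambda^2+\omega^2=1$). Define $\zeta(s)=-e^{\lambda s}\bigl(\cos(\omega s)-\frac{\lambda}{\omega}\sin(\omega s)\bigr)$ (the solution of $z^{(4)}+c^2z''+z=0$ with $\zeta(0)=-1$, $\zeta'(0)=0$ decaying as $s\to-\infty$), let $t^*>0$ be the smallest $s>0$ with $\zeta(s)=-1$ (it satisfies $\omega t^*\in(\pi,2\pi)$), and set $\theta_{min}(c):=\zeta'(t^* )=e^{\lambda t^*}\sin(\omega t^* )/\omega<0$. Equivalently, $\theta_{min}(c)$ is the unique negative $\theta$ with $e^{2\lambda t^*}=\theta^2+2\lambda\theta+1$ where $t^*=\frac1\omega\bigl(\frac{3\pi}{2}-\arctan\frac{\lambda\theta+1}{\omega\theta}\bigr)$. For $p\in(0,1)$ put $\xi=pc^4/4$, $\kappa_1^2=\frac{c^2-\sqrt{c^4-4\xi}}{2}$, $\kappa_2^2=\frac{c^2+\sqrt{c^4-4\xi}}{2}$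 ($0<\kappa_1<\kappa_2$), $\theta_{1,2}(c,p)=\dfrac{-2\sqrt{2-c^2}}{2-c^2\mp c^2\sqrt{1-p}}$ (upper sign for $\theta_1$), and $$L(c,p,\theta)=\frac12\Bigl(1+\frac{\kappa_2}{\kappa_1}\Bigr)+\frac1\pi\arctan\!\left(\frac{\kappa_2(-\kappa_1^2+\xi+\xi\theta\sqrt{2-c^2})}{\xi(\theta\kappa_1^2+\sqrt{2-c^2}+\theta(1-c^2))}\right)-\frac{\kappa_2}{\kappa_1\pi}\arctan\!\left(\frac{\kappa_1(-\kappa_2^2+\xi+\xi\theta\sqrt{2-c^2})}{\xi(\theta\kappa_2^2+\sqrt{2-c^2}+\theta(1-c^2))}\right),$$ which is defined for $\theta\neq\theta_1,\theta_2$ (these are exactly the zeros of the two denominators). Even one-troughed solutions of $z^{(4)}+c^2z''+(z+1)^+-\xi(z+1)^--1=0$, $z,z'\to0$ at $\pm\infty$, correspond to solutions $\theta\in(\theta_{min}(c),\theta_2(c,p))$ of $L(c,p,\theta)=k$, $k\in\mathbb{N}$, where $\theta$ is the slope $z'(t_1)$ at the leftmost point $t_1$ with $z(t_1)=-1$. *)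

(* Defs.v *)
From Stdlib Require Import Reals.
Open Scope R_scope.

Definition lam (c : R) : R := sqrt (2 - c^2) / 2.
Definition omg (c : R) : R := sqrt (2 + c^2) / 2.

Definition zeta (c s : R) : R :=
  - exp (lam c * s) * (cos (omg c * s) - lam c / omg c * sin (omg c * s)).

Definition is_tstar (c tt : R) : Prop :=
  0 < tt /\ zeta c tt = -1 /\ (forall s, 0 < s < tt -> zeta c s <> -1).

(* theta_min(c) = zeta'(tstar) = e^{lambda tstar} sin(omega tstar) / omega *)
Definition theta_min_at (c tt : R) : R :=
  exp (lam c * tt) * sin (omg c * tt) / omg c.

Definition xi (c p : R) : R := p * c^4 / 4.
Definition kappa1 (c p : R) : R := sqrt ((c^2 - sqrt (c^4 - 4 * xi c p)) / 2).
Definition kappa2 (c p : R) : R := sqrt ((c^2 + sqrt (c^4 - 4 * xi c p)) / 2).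

Definition theta1 (c p : R) : R :=
  - 2 * sqrt (2 - c^2) / (2 - c^2 - c^2 * sqrt (1 - p)).
Definition theta2 (c p : R) : R :=
  - 2 * sqrt (2 - c^2) / (2 - c^2 + c^2 * sqrt (1 - p)).

Definition Lfun (c p th : R) : R :=
  let k1 := kappa1 c p in
  let k2 := kappa2 c p in
  let x := xi c p in
  let s := sqrt (2 - c^2) in
  / 2 * (1 + k2 / k1)
  + / PI * atan (k2 * (- k1^2 + x + x * th * s) / (x * (th * k1^2 + s + th * (1 - c^2))))
  - k2 / (k1 * PI) * atan (k1 * (- k2^2 + x + x * th * s) / (x * (th * k2^2 + s + th * (1 - c^2)))).

(* Main.v *)
Require Import Defs.
From Stdlib Require Import Reals Lra Psatz.
Open Scope R_scope.

Lemma atan_le_id (y : R) : 0 < y -> atan y <= y.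
Proof.
  intros Hy.
  destruct (MVT_cor2 atan (fun x => / (1 + x ^ 2)) 0 y Hy) as [z [Hz Hzr]].
  { intros; apply derivable_pt_lim_atan. }
  rewrite atan_0 in Hz.
  assert (H1 : 0 < 1 + z ^ 2) by nra.
  assert (H2 : / (1 + z ^ 2) <= 1).
  { rewrite <- Rinv_1. apply Rinv_le_contravar; nra. }
  assert (0 < / (1 + z ^ 2)) by (apply Rinv_0_lt_compat; lra).
  nra.
Qed.

Lemma sq_eq (u v : R) : 0 <= u -> 0 <= v -> u * u = v * v -> u = v.
Proof. intros; nra. Qed.

Theorem lemma4 (c tstar : R) :
  0 < c < sqrt 2 ->
  is_tstar c tstar ->
  forall p th : R,
    0 < p < 1 ->
    theta_min_at c tstar < th < theta2 c p ->
    th <> theta1 c p ->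
    Lfun c p th <= 1 - c / PI * (sqrt (2 - c^2) + theta_min_at c tstar).
Proof.
  intros [Hc0 Hc2] _ p th [Hp0 Hp1] [Hmin Hth2] _.
  set (tm := theta_min_at c tstar) in *.
  assert (Hcc : c^2 < 2).
  { assert (H := pow2_sqrt 2 ltac:(lra)). nra. }
  set (s := sqrt (2 - c^2)).
  assert (Hs : 0 < s) by (apply sqrt_lt_R0; lra).
  assert (Hs2 : s * s = 2 - c^2) by (apply sqrt_sqrt; lra).
  set (q := sqrt (1 - p)).
  assert (Hq0 : 0 < q) by (apply sqrt_lt_R0; lra).
  assert (Hqq : q * q = 1 - p) by (apply sqrt_sqrt; lra).
  assert (Hq1 : q < 1) by nra.
  set (x := xi c p).
  assert (Hx : x = p * c^4 / 4) by reflexivity.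
  set (D := sqrt (c ^ 4 - 4 * x)).
  assert (HD2 : D * D = c^4 - 4 * x) by (apply sqrt_sqrt; rewrite Hx; nra).
  assert (HD0 : 0 <= D) by apply sqrt_pos.
  assert (HDq : D = c^2 * q).
  { apply sq_eq; [lra| nra |]. rewrite HD2, Hx.
    replace (c ^ 2 * q * (c ^ 2 * q)) with (c^4 * (q*q)) by ring. rewrite Hqq. field. }
  assert (Hcq : 0 < c^2 * (1 - q)) by (apply Rmult_lt_0_compat; nra).
  set (a := kappa1 c p). set (b := kappa2 c p).
  assert (Ha2 : a * a = (c^2 - D) / 2).
  { unfold a, kappa1. fold x. fold D. apply sqrt_sqrt. nra. }
  assert (Hb2 : b * b = (c^2 + D) / 2).
  { unfold b, kappa2. fold x. fold D. apply sqrt_sqrt. nra. }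
  assert (Ha0 : 0 < a).
  { unfold a, kappa1. fold x. fold D. apply sqrt_lt_R0. lra. }
  assert (Hb0 : 0 < b).
  { unfold b, kappa2. fold x. fold D. apply sqrt_lt_R0. nra. }
  assert (Hbc : b < c) by nra.
  assert (Ha1 : a * a < 1) by nra.
  assert (Hxab : x = a * a * (b * b)).
  { rewrite Ha2, Hb2. replace ((c ^ 2 - D) / 2 * ((c ^ 2 + D) / 2)) with ((c^4 - D*D)/4) by field.
    rewrite HD2, Hx. field. }
  assert (HE : s + th * (1 - a * a) < 0).
  { unfold theta2 in Hth2. fold s in Hth2. fold q in Hth2.
    assert (Hden : 0 < 2 - c ^ 2 + c ^ 2 * q) by nra.
    assert (H1a : 1 - a * a = (2 - c ^ 2 + c ^ 2 * q) / 2) by (rewrite Ha2, HDq; field).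
    rewrite H1a.
    apply (Rmult_lt_compat_r (2 - c ^ 2 + c ^ 2 * q)) in Hth2; [|lra].
    replace (- 2 * s / (2 - c ^ 2 + c ^ 2 * q) * (2 - c ^ 2 + c ^ 2 * q)) with (-2 * s) in Hth2
      by (field; repeat split; nra).
    nra. }
  assert (Hth0 : th < 0) by nra.
  set (E := s + th * (1 - a * a)).
  set (M := a * a * (1 + th * s) - 1).
  assert (HM : M < 0) by (unfold M; assert (th * s < 0) by nra; assert (0 < a*a) by nra; nra).
  set (Bv := a * (- b ^ 2 + x + x * th * s) / (x * (th * b ^ 2 + s + th * (1 - c ^ 2)))).
  assert (HcAB : c ^ 2 = a * a + b * b) by (rewrite Ha2, Hb2; field).
  assert (HBv : Bv = M / (a * E)).
  { unfold Bv, M, E. rewrite Hxab, HcAB.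
    field. repeat split; try lra; try nra. }
  assert (HaE : a * E < 0) by (unfold E in *; nra).
  assert (HBpos : 0 < Bv).
  { rewrite HBv. replace (M / (a * E)) with ((- M) / (- (a * E))) by (field; repeat split; nra).
    apply Rdiv_lt_0_compat; lra. }
  assert (HinvB : / Bv = a * E / M) by (rewrite HBv; field; repeat split; nra).
  assert (HPI : 0 < PI) by exact PI_RGT_0.
  assert (HK : b * E / M <= c * (- s - th)).
  { assert (HEM : 0 < E / M) by
      (replace (E / M) with ((- E) / (- M)) by (field; repeat split; nra); apply Rdiv_lt_0_compat; unfold E; lra).
    assert (Hpoly : 0 < 1 + th * s + th * th) by nra.
    assert (Hnum : 0 <= E - (- s - th) * M).
    { replace (E - (- s - th) * M) with (a * a * s * (1 + th * s + th * th)) by (unfold E, M; ring).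
      apply Rmult_le_pos; [|lra]. apply Rmult_le_pos; nra. }
    assert (HEM2 : E / M <= - s - th).
    { assert (E / M - (- s - th) = (E - (- s - th) * M) / M) by (field; repeat split; nra).
      assert ((E - (- s - th) * M) / M <= 0).
      { replace ((E - (- s - th) * M) / M) with (- ((E - (- s - th) * M) / (- M))) by (field; repeat split; nra).
        assert (0 <= (E - (- s - th) * M) / (- M)) by (apply Rmult_le_pos; [lra| left; apply Rinv_0_lt_compat; lra]). lra. }
      lra. }
    replace (b * E / M) with (b * (E / M)) by (field; repeat split; nra).
    nra. }
  unfold Lfun. cbv zeta. fold a b x s. fold Bv.
  assert (HaB : atan Bv = PI / 2 - atan (/ Bv)) by (rewrite (atan_inv Bv HBpos); ring).
  rewrite HaB.
  pose proof (atan_le_id (/ Bv) ltac:(apply Rinv_0_lt_compat; lra)) as HT.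
  set (A := b * (- a ^ 2 + x + x * th * s) / (x * (th * a ^ 2 + s + th * (1 - c ^ 2)))).
  set (T := atan (/ Bv)) in *.
  destruct (atan_bound A) as [_ HA].
  assert (HbT : b / a * T <= b * E / M).
  { rewrite HinvB in HT.
    assert (0 < b / a) by (apply Rdiv_lt_0_compat; lra).
    replace (b * E / M) with (b / a * (a * E / M)) by (field; repeat split; nra).
    apply Rmult_le_compat_l; lra. }
  assert (H1 : atan A + b / a * T <= PI / 2 + c * (- s - tm)) by nra.
  replace (/ 2 * (1 + b / a) + / PI * atan A - b / (a * PI) * (PI / 2 - T))
    with (/ 2 + (atan A + b / a * T) * / PI) by (field; repeat split; nra).
  replace (1 - c / PI * (s + tm)) with (/ 2 + (PI / 2 + c * (- s - tm)) * / PI)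
    by (field; repeat split; nra).
  apply Rplus_le_compat_l. apply Rmult_le_compat_r; [left; apply Rinv_0_lt_compat; lra | lra].
Qed.
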